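(* In the FAVANO process, assume each $\nabla f_i$ is $L$-Lipschitz and the stochastic gradients have bounded variance $\sigma^2$, and assume $\eta<\frac{1}{4LK^2}$. Then for every client $i$, every time step $t\ge0$ and every local step $q\in\{1,\dots,K\}$, $$\mathbb{E}\|h^i_{t+1,q}\|^2\le B^i_t:=\frac{\sigma^2}{K^2}+16L^2\,\mathbb{E}\|w^i_t-\mu_t\|^2+8\,\mathbb{E}\|\nabla f_i(\mu_t)\|^2 .$$
   Context: FAVANO process. Fix integers $n\ge1$, $1\le s\le n$, $K\ge1$, $d\ge1$, a step size $\eta>0$ and differentiable $f_1,\dots,f_n:\mathbb{R}^d\to\mathbb{R}$, $f=\frac1n\sum_i f_i$. All random variables live on one probability space. For each client $i$ a stochastic gradient oracle returns, at a query point $x$, $\widetilde g^i(x)=\nabla f_i(x)+\xi$ where, conditionally on everything generated before the query (including $x$), $\xi$ has mean zero (each query uses fresh noise). Initialize $w_0\in\mathbb{R}^d$ deterministic and $w_0^i=w_0$ for all $i$. For each $t\ge1$, each client $i$ and each $q\ge1$ define recursively $\widetilde h^i_{t,q}=\widetilde g^i\big(w^i_{t-1}-\eta\sum_{r=1}^{q-1}\widetilde h^i_{t,r}\big)$ and $h^i_{t,q}=\nabla f_i\big(w^i_{t-1}-\eta\sum_{r=1}^{q-1}\widetilde h^i_{t,r}\big)$. At each $t\ge1$ there are random integers $E^1_t,\dots,E^n_t\ge0$ with $\mathbf{P}(E^i_t>0)>0$, and a random subset $\mathcal{S}_t\subseteq\{1,\dots,n\}$ uniformly distributed among subsets of size $s$;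 the family $(\mathcal S_t,E^1_t,\dots,E^n_t)$ is independent of all the other randomness (the past up to time $t-1$ and all $\widetilde h^i_{t,q}$), and $\mathcal S_t$ is independent of $(E^i_t)_i$. The weight $\alpha^i_t$ is either $\mathbf{P}(E^i_t>0)\,(E^i_t\wedge K)$ (stochastic version) or $\mathbb{E}[E^i_t\wedge K]$ (deterministic version), where $a\wedge b=\min(a,b)$. Set $\check h^i_t=\frac{1}{\alpha^i_t}\sum_{q=1}^{E^i_t\wedge K}\widetilde h^i_{t,q}$ if $E^i_t>0$ and $\check h^i_t=0$ otherwise. Updates: $w_t=\frac{1}{s+1}\big(w_{t-1}+\sum_{i\in\mathcal S_t}(w^i_{t-1}-\eta\check h^i_t)\big)$; $w^i_t=w_t$ for $i\in\mathcal S_t$ and $w^i_t=w^i_{t-1}$ for $i\notin\mathcal S_t$. Define $\mu_t=\frac{1}{n+1}\big(w_t+\sum_{i=1}^n w^i_t\big)$. All expectations appearing are assumed finite. Smoothness: $\|\nabla f_i(x)-\nabla f_i(y)\|\le L\|x-y\|$ for all $i,x,y$, with $L>0$. Bounded variance: conditionally on everything generated before a query at $x$, $\mathbb{E}\|\widetilde g^i(x)-\nabla f_i(x)\|^2\le\sigma^2$. *)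

(* Defs.v *)
From HB Require Import structures.
From mathcomp Require Import all_boot all_order all_algebra.
From mathcomp Require Import all_classical all_reals all_analysis.
Set Implicit Arguments. Unset Strict Implicit. Unset Printing Implicit Defensive.
Import Order.TTheory GRing.Theory Num.Theory.
Import numFieldNormedType.Exports.
Local Open Scope classical_set_scope.
Local Open Scope ring_scope.

Definition sqnorm (R : realType) (m : nat) (v : 'rV[R]_m) : R :=
  \sum_(j < m) (v 0 j) ^+ 2.
Definition enorm (R : realType) (m : nat) (v : 'rV[R]_m) : R :=
  Num.sqrt (sqnorm v).
Definition dotp (R : realType) (m : nat) (u v : 'rV[R]_m) : R :=
  \sum_(j < m) u 0 j * v 0 j.

Section Favano.
Variables (R : realType) (dd : measure_display) (Omega : measurableType dd)
  (P : probability Omega R).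

Definition vec_events (m : nat) (X : Omega -> 'rV[R]_m) : set (set Omega) :=
  [set A | exists (j : 'I_m) (B : set R),
     measurable B /\ A = (fun w => X w 0 j) @^-1` B].
Definition disc_events (T : Type) (X : Omega -> T) : set (set Omega) :=
  [set A | exists B : set T, A = X @^-1` B].

Definition indep_families (F G : set (set Omega)) : Prop :=
  forall A B, F A -> G B -> (P (A `&` B) = P A * P B)%E.

Variables (n dim s K : nat) (eta : R) (stoch : bool) (w0 : 'rV[R]_dim).
Variables (S : nat -> Omega -> {set 'I_n}) (E : nat -> 'I_n -> Omega -> nat)
  (htilde : nat -> 'I_n -> nat -> Omega -> 'rV[R]_dim).

Definition alpha (t : nat) (i : 'I_n) (w : Omega) : R :=
  if stoch then fine (P [set x | (0 < E t i x)%N]) * (minn (E t i w) K)%:R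
  else fine (\int[P]_x ((minn (E t i x) K)%:R : R)%:E).

Definition checkh (t : nat) (i : 'I_n) (w : Omega) : 'rV[R]_dim :=
  if (0 < E t i w)%N then
    (alpha t i w)^-1 *: \sum_(1 <= q < (minn (E t i w) K).+1) htilde t i q w
  else 0.

Fixpoint state (t : nat) (w : Omega) : 'rV[R]_dim * ('I_n -> 'rV[R]_dim) :=
  match t with
  | 0 => (w0, fun _ => w0)
  | t'.+1 =>
      let wp := (state t' w).1 in
      let wl := (state t' w).2 in
      let wn := (s.+1%:R)^-1 *:
                 (wp + \sum_(i in S t'.+1 w) (wl i - eta *: checkh t'.+1 i w)) in
      (wn, fun i => if i \in S t'.+1 w then wn else wl i)
  end.

Definition wglob (t : nat) (w : Omega) : 'rV[R]_dim := (state t w).1.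
Definition wloc (t : nat) (i : 'I_n) (w : Omega) : 'rV[R]_dim := (state t w).2 i.
Definition mu (t : nat) (w : Omega) : 'rV[R]_dim :=
  (n.+1%:R)^-1 *: (wglob t w + \sum_(i < n) wloc t i w).

(* query point of the q-th local step of client i at round t (t, q >= 1) *)
Definition qpoint (t : nat) (i : 'I_n) (q : nat) (w : Omega) : 'rV[R]_dim :=
  wloc t.-1 i w - eta *: \sum_(1 <= r < q) htilde t i r w.

(* sigma-algebra of everything generated before the query (t,i,q):
   S_u, E^j_u and all htilde^j_{u,r} for rounds 1 <= u < t, and
   htilde^i_{t,r} for 1 <= r < q. *)
Definition past (t : nat) (i : 'I_n) (q : nat) : set (set Omega) :=
  <<s [set A | exists u, (1 <= u < t)%N /\
          (disc_events (S u) A \/ exists j, disc_events (E u j) A)]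
      `|` [set A | exists u j r, (1 <= u < t)%N /\ vec_events (htilde u j r) A]
      `|` [set A | exists r, (1 <= r < q)%N /\ vec_events (htilde t i r) A] >>.

Definition SE_sigma (t : nat) : set (set Omega) :=
  <<s disc_events (S t) `|` [set A | exists j, disc_events (E t j) A] >>.
Definition S_sigma (t : nat) : set (set Omega) := <<s disc_events (S t) >>.
Definition E_sigma (t : nat) : set (set Omega) :=
  <<s [set A | exists j, disc_events (E t j) A] >>.

Definition other_sigma (t : nat) : set (set Omega) :=
  <<s [set A | exists u, (1 <= u < t)%N /\
          (disc_events (S u) A \/ exists j, disc_events (E u j) A)]
      `|` [set A | exists u j r, (1 <= u <= t)%N /\ vec_events (htilde u j r) A] >>.

End Favano.

(* Main.v *)
Require Import Defs.
From HB Require Import structures.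
From mathcomp Require Import all_boot all_order all_algebra.
From mathcomp Require Import all_classical all_reals all_analysis.
From mathcomp Require Import lra ring measurable_realfun.
Import Order.TTheory GRing.Theory Num.Theory.
Import numFieldNormedType.Exports.
Local Open Scope classical_set_scope.
Local Open Scope ring_scope.
Definition mvec {d} {T : measurableType d} {R : realType} {m} (V : T -> 'rV[R]_m) :=
  forall j, measurable_fun setT (fun w => V w 0 j).

Lemma mf_disc d (T : measurableType d) (R : realType) (C : countType)
  (N : T -> C) (F : C -> T -> R) :
  (forall k, measurable [set w | N w = k]) ->
  (forall k, measurable_fun setT (F k)) ->
  measurable_fun setT (fun w => F (N w) w).
Proof.
move=> HN HF _ B mB; rewrite setTI.
have -> : (fun w => F (N w) w) @^-1` B =
    \bigcup_k ([set w | N w = k] `&` (F k @^-1` B)).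
  apply/seteqP; split => w /=.
  - by move=> Hw; exists (N w).
  - by move=> [k _ [/= <-]].
apply: countable_bigcupT_measurable; first exact: countableP.
move=> k; apply: measurableI => //.
by have := HF k measurableT B mB; rewrite setTI.
Qed.

Lemma mvec_disc d (T : measurableType d) (R : realType) m (C : countType)
  (N : T -> C) (F : C -> T -> 'rV[R]_m) :
  (forall k, measurable [set w | N w = k]) ->
  (forall k, mvec (F k)) -> mvec (fun w => F (N w) w).
Proof.
move=> HN HF j.
by apply: (@mf_disc _ _ _ _ N (fun k w => F k w 0 j)) => // k; exact: HF.
Qed.

Lemma mvec_cst d (T : measurableType d) (R : realType) m (v : 'rV[R]_m) :
  mvec (fun _ : T => v).
Proof. by move=> j; exact: measurable_cst. Qed.

Lemma mvecD d (T : measurableType d) (R : realType) m (U V : T -> 'rV[R]_m) :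
  mvec U -> mvec V -> mvec (fun w => U w + V w).
Proof.
move=> HU HV j.
have -> : (fun w => (U w + V w) 0 j) = (fun w => U w 0 j) \+ (fun w => V w 0 j).
  by apply/funext => w; rewrite mxE.
exact: measurable_realfun.measurable_funD.
Qed.

Lemma mvecZ d (T : measurableType d) (R : realType) m (c : R) (V : T -> 'rV[R]_m) :
  mvec V -> mvec (fun w => c *: V w).
Proof.
move=> HV j.
have -> : (fun w => (c *: V w) 0 j) = (fun _ => c) \* (fun w => V w 0 j).
  by apply/funext => w; rewrite mxE.
by apply: measurable_realfun.measurable_funM => //; exact: measurable_cst.
Qed.

Lemma mvecB d (T : measurableType d) (R : realType) m (U V : T -> 'rV[R]_m) :
  mvec U -> mvec V -> mvec (fun w => U w - V w).
Proof.
move=> HU HV; apply: mvecD => //.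
have -> : (fun w => - V w) = (fun w => (-1) *: V w).
  by apply/funext => w; rewrite scaleN1r.
exact: mvecZ.
Qed.

Lemma mvec_sum d (T : measurableType d) (R : realType) m (I : Type) (s : seq I)
  (Pr : pred I) (V : I -> T -> 'rV[R]_m) :
  (forall i, mvec (V i)) -> mvec (fun w => \sum_(i <- s | Pr i) V i w).
Proof.
move=> HV j.
have -> : (fun w => (\sum_(i <- s | Pr i) V i w) 0 j) =
    (fun w => \sum_(i <- s) (if Pr i then V i w 0 j else 0)).
  by apply/funext => w; rewrite summxE big_mkcond.
apply: measurable_sum => i; case: (Pr i); [exact: HV | exact: measurable_cst].
Qed.

Lemma mf_sqnorm d (T : measurableType d) (R : realType) m (V : T -> 'rV[R]_m) :
  mvec V -> measurable_fun setT (fun w => sqnorm (V w)).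
Proof.
move=> HV; rewrite /sqnorm.
by apply: measurable_sum => j; apply: measurable_realfun.measurable_funX.
Qed.

Lemma state_meas (R : realType) (dd : measure_display) (Omega : measurableType dd)
  (P : probability Omega R) (n dim s K : nat) (eta : R) (stoch : bool) (w0 : 'rV[R]_dim)
  (Ssel : nat -> Omega -> {set 'I_n}) (E : nat -> 'I_n -> Omega -> nat)
  (htilde : nat -> 'I_n -> nat -> Omega -> 'rV[R]_dim) :
  (forall t (A : {set 'I_n}), measurable [set w | Ssel t w = A]) ->
  (forall t i k, measurable [set w | E t i w = k]) ->
  (forall t i q, mvec (htilde t i q)) ->
  forall t, mvec (wglob P s K eta stoch w0 Ssel E htilde t) /\
    forall i, mvec (wloc P s K eta stoch w0 Ssel E htilde t i).
Proof.
move=> HS HE Hh; elim => [|t [IHg IHl]].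
  by split => [|i] j; rewrite /wglob /wloc /=; exact: measurable_cst.
have Hc : forall i, mvec (checkh P K stoch E htilde t.+1 i).
  move=> i.
  pose F := fun (k : nat) (w : Omega) =>
    if (0 < k)%N then
      ((if stoch then fine (P [set x | (0 < E t.+1 i x)%N]) * (minn k K)%:R
        else fine (\int[P]_x ((minn (E t.+1 i x) K)%:R : R)%:E))^-1 *:
        \sum_(1 <= q < (minn k K).+1) htilde t.+1 i q w)
    else 0.
  have -> : checkh P K stoch E htilde t.+1 i = fun w => F (E t.+1 i w) w by [].
  apply: mvec_disc => // k; rewrite /F; case: (0 < k)%N; last exact: mvec_cst.
  by apply: mvecZ; apply: mvec_sum => q; exact: Hh.
have Hn : mvec (wglob P s K eta stoch w0 Ssel E htilde t.+1).
  have -> : wglob P s K eta stoch w0 Ssel E htilde t.+1 = fun w =>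
     (s.+1%:R)^-1 *: (wglob P s K eta stoch w0 Ssel E htilde t w +
       \sum_i (if i \in Ssel t.+1 w then
          (wloc P s K eta stoch w0 Ssel E htilde t i w - eta *: checkh P K stoch E htilde t.+1 i w)
          else 0)).
    by apply/funext => w; rewrite /wglob /= -big_mkcond.
  apply: mvecZ; apply: mvecD => //; apply: mvec_sum => i.
  apply: (@mvec_disc _ _ _ _ _ (Ssel t.+1) (fun A w => if i \in A then
     (wloc P s K eta stoch w0 Ssel E htilde t i w - eta *: checkh P K stoch E htilde t.+1 i w)
          else 0)) => // A.
  by case: (i \in A); [apply: mvecB => //; exact: mvecZ | exact: mvec_cst].
split => // i.
have -> : wloc P s K eta stoch w0 Ssel E htilde t.+1 i = fun w =>
   if i \in Ssel t.+1 w then wglob P s K eta stoch w0 Ssel E htilde t.+1 w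
   else wloc P s K eta stoch w0 Ssel E htilde t i w by [].
apply: (@mvec_disc _ _ _ _ _ (Ssel t.+1) (fun A w => if i \in A then
   wglob P s K eta stoch w0 Ssel E htilde t.+1 w
   else wloc P s K eta stoch w0 Ssel E htilde t i w)) => // A.
by case: (i \in A).
Qed.
Lemma sqnorm_ge0 (R : realType) m (v : 'rV[R]_m) : 0 <= sqnorm v.
Proof. by rewrite /sqnorm; apply: sumr_ge0 => j _; exact: sqr_ge0. Qed.

Lemma sqnormD2 (R : realType) m (u v : 'rV[R]_m) :
  sqnorm (u + v) <= 2 * sqnorm u + 2 * sqnorm v.
Proof.
rewrite /sqnorm !mulr_sumr -big_split /=; apply: ler_sum => j _.
rewrite mxE -subr_ge0.
have -> : 2 * u 0 j ^+ 2 + 2 * v 0 j ^+ 2 - (u 0 j + v 0 j) ^+ 2 = (u 0 j - v 0 j) ^+ 2 by ring.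
exact: sqr_ge0.
Qed.

Lemma sqnormZ (R : realType) m (c : R) (v : 'rV[R]_m) :
  sqnorm (c *: v) = c ^+ 2 * sqnorm v.
Proof.
rewrite /sqnorm mulr_sumr; apply: eq_bigr => j _; rewrite mxE; ring.
Qed.

Lemma sqnormN (R : realType) m (v : 'rV[R]_m) : sqnorm (- v) = sqnorm v.
Proof. by rewrite -scaleN1r sqnormZ; ring. Qed.

Lemma sq_sum_le (R : realType) (I : Type) (s : seq I) (a : I -> R) :
  (\sum_(i <- s) a i) ^+ 2 <= (size s)%:R * \sum_(i <- s) a i ^+ 2.
Proof.
elim: s => [|x s IH]; first by rewrite !big_nil expr0n /= mulr0.
rewrite !big_cons /=.
set S := \sum_(i <- s) a i; set Q := \sum_(i <- s) a i ^+ 2; pose m : R := (size s)%:R.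
have Q0 : 0 <= Q by apply: sumr_ge0 => i _; exact: sqr_ge0.
have m0 : 0 <= m by rewrite /m ler0n.
have {}IH : S ^+ 2 <= m * Q := IH.
have -> : ((size s).+1%:R : R) = m + 1 by rewrite /m -natr1.
case: (ltrP 0 m) => hm.
  have H : 0 <= m * ((m + 1) * (a x ^+ 2 + Q) - (a x + S) ^+ 2).
    have -> : m * ((m + 1) * (a x ^+ 2 + Q) - (a x + S) ^+ 2) =
      (m * a x - S) ^+ 2 + (m + 1) * (m * Q - S ^+ 2) by ring.
    apply: addr_ge0; first exact: sqr_ge0.
    by apply: mulr_ge0; [rewrite addr_ge0 | rewrite subr_ge0].
  rewrite -subr_ge0; move: H; rewrite pmulr_rge0 //.
have m00 : m = 0 by apply/eqP; rewrite eq_le hm m0.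
rewrite m00 mul0r in IH.
have S0 : S = 0 by apply/eqP; rewrite -sqrf_eq0 eq_le IH sqr_ge0.
rewrite m00 S0 add0r mul1r addr0 lerDl //.
Qed.

Lemma sqnorm_sum (R : realType) m (I : Type) (s : seq I) (v : I -> 'rV[R]_m) :
  sqnorm (\sum_(i <- s) v i) <= (size s)%:R * \sum_(i <- s) sqnorm (v i).
Proof.
rewrite /sqnorm [X in _ <= _ * X]exchange_big /= mulr_sumr.
apply: ler_sum => j _; rewrite summxE; exact: sq_sum_le.
Qed.

Lemma lip_sq (R : realType) m (a b : 'rV[R]_m) (L : R) :
  0 <= L -> enorm a <= L * enorm b -> sqnorm a <= L ^+ 2 * sqnorm b.
Proof.
move=> L0 H.
have ea : enorm a ^+ 2 = sqnorm a by rewrite /enorm sqr_sqrtr // sqnorm_ge0.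
have eb : enorm b ^+ 2 = sqnorm b by rewrite /enorm sqr_sqrtr // sqnorm_ge0.
have a0 : 0 <= enorm a by rewrite /enorm sqrtr_ge0.
rewrite -ea -eb -exprMn; apply: lerXn2r => //; rewrite ?nnegrE //.
exact: le_trans H.
Qed.
Local Open Scope ereal_scope.

Lemma mfE d (T : measurableType d) (R : realType) (f : T -> R) :
  measurable_fun setT f -> measurable_fun setT (EFin \o f).
Proof. by move=> mf; apply/measurable_realfun.measurable_EFinP. Qed.

Lemma le_integral_nm d (T : measurableType d) (R : realType)
  (mu : {measure set T -> \bar R}) (f1 f2 : T -> \bar R) :
  (forall x, 0 <= f1 x) -> (forall x, f1 x <= f2 x) ->
  \int[mu]_x f1 x <= \int[mu]_x f2 x.
Proof.
move=> f10 f12.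
have f20 : forall x, 0 <= f2 x by move=> x; exact: le_trans (f10 x) (f12 x).
rewrite !ge0_integralE //.
apply: le_ereal_sup => _ [h Hh <-]; exists h => // x.
apply: le_trans (Hh x) _; rewrite /patch; case: ifP => // _; exact: f12.
Qed.

Lemma intD d (T : measurableType d) (R : realType)
  (mu : {measure set T -> \bar R}) (f g : T -> R) :
  measurable_fun setT f -> measurable_fun setT g ->
  (forall x, (0 <= f x)%R) -> (forall x, (0 <= g x)%R) ->
  \int[mu]_x (f x + g x)%:E = \int[mu]_x (f x)%:E + \int[mu]_x (g x)%:E.
Proof.
move=> mf mg f0 g0.
rewrite (eq_integral (fun x => (f x)%:E + (g x)%:E)); last by move=> x _; rewrite EFinD.
by apply: ge0_integralD => //; try (by move=> x _; rewrite lee_fin); exact: mfE.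
Qed.

Lemma intZ d (T : measurableType d) (R : realType)
  (mu : {measure set T -> \bar R}) (c : R) (f : T -> R) :
  measurable_fun setT f -> (0 <= c)%R -> (forall x, (0 <= f x)%R) ->
  \int[mu]_x (c * f x)%:E = c%:E * \int[mu]_x (f x)%:E.
Proof.
move=> mf c0 f0.
rewrite (eq_integral (fun x => c%:E * (f x)%:E)); last by move=> x _; rewrite EFinM.
by apply: ge0_integralZl => // [|x _]; [exact: mfE | rewrite lee_fin].
Qed.

Lemma intS d (T : measurableType d) (R : realType)
  (mu : {measure set T -> \bar R}) (I : Type) (s : seq I) (F : I -> T -> R) :
  (forall i, measurable_fun setT (F i)) -> (forall i x, (0 <= F i x)%R) ->
  \int[mu]_x (\sum_(i <- s) F i x)%:E = \sum_(i <- s) \int[mu]_x (F i x)%:E.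
Proof.
move=> mF F0.
rewrite (eq_integral (fun x => \sum_(i <- s) (F i x)%:E)); last by move=> x _; rewrite sumEFin.
by apply: ge0_integral_sum => // [i|i x _]; [exact: mfE | rewrite lee_fin].
Qed.
Local Close Scope ereal_scope.

Lemma key_real (R : realType) (L eta a s2 k qm : R) :
  (0 < L)%R -> (0 < eta)%R -> (1 <= k)%R -> (0 <= qm)%R -> (qm <= k)%R -> (0 <= a)%R -> (0 <= s2)%R ->
  (eta < (4 * L * k ^+ 2)^-1)%R ->
  (2 * a + (4 * L ^+ 2 * eta ^+ 2 * qm) * (qm * ((s2 / k ^+ 2 + 4 * a) + s2))
    <= s2 / k ^+ 2 + 4 * a)%R.
Proof.
move=> L0 e0 k1 q0 qk a0 s0 he.
have k0 : (0 < k)%R by apply: lt_le_trans k1.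
have k20 : (0 < k ^+ 2)%R by apply: exprn_gt0.
set y := (k ^+ 2)^-1.
have y0 : (0 < y)%R by rewrite invr_gt0.
have y1 : (y <= 1)%R.
  rewrite /y invr_le1 //; last exact: unitf_gt0.
  by rewrite expr2; apply: (le_trans k1); rewrite ler_peMr // ?ltW.
have yk : (y * k ^+ 2 = 1)%R by rewrite /y mulVf // gt_eqF.
have hu : (eta * L * (4 * k ^+ 2) < 1)%R.
  have h4 : (0 < 4 * L * k ^+ 2)%R by rewrite !mulr_gt0.
  move: he; rewrite -(ltr_pM2r h4) mulVf ?gt_eqF //.
  by rewrite !mulrA [eta * L * 4]mulrAC.
set u := (eta * L)%R in hu.
have u0 : (0 < u)%R by rewrite mulr_gt0.
set c := (4 * L ^+ 2 * eta ^+ 2 * qm * qm)%R.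
have cE : (c = 4 * (u * qm) ^+ 2)%R by rewrite /c /u; ring.
have c0 : (0 <= c)%R by rewrite cE mulr_ge0 // sqr_ge0.
have uq : (u * qm <= u * k)%R by rewrite ler_pM2l.
have uq0 : (0 <= u * qm)%R by rewrite mulr_ge0 // ltW.
have c1 : (c * (4 * k ^+ 2) <= 1)%R.
  have h1 : (u * k * (4 * k) < 1)%R.
    by have -> : (u * k * (4 * k) = u * (4 * k ^+ 2))%R by ring.
  have h2 : ((u * qm) ^+ 2 <= (u * k) ^+ 2)%R by rewrite lerXn2r ?nnegrE // mulr_ge0 // ltW.
  have h3 : (0 <= u * k * (4 * k))%R by rewrite !mulr_ge0 // ltW.
  have h4 : ((u * k * (4 * k)) ^+ 2 <= 1)%R.
    by rewrite -[leRHS](expr1n _ 2%N) lerXn2r ?nnegrE //; exact: ltW.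
  rewrite cE.
  apply: le_trans h4.
  have -> : ((u * k * (4 * k)) ^+ 2 = 4 * (u * k) ^+ 2 * (4 * k ^+ 2))%R by ring.
  rewrite ler_pM2r ?mulr_gt0 // ler_pM2l //.
have cy : (c <= y / 4)%R.
  have -> : (y / 4 = 1 / (4 * k ^+ 2))%R.
    by rewrite /y; field; rewrite gt_eqF.
  by rewrite ler_pdivlMr // mulr_gt0.
have -> : ((4 * L ^+ 2 * eta ^+ 2 * qm) * (qm * ((s2 * y + 4 * a) + s2)) = c * ((s2 * y + 4 * a) + s2))%R.
  by rewrite /c; ring.
have hB : (0 <= s2 * y + 4 * a + s2)%R by rewrite !addr_ge0 // mulr_ge0 // ltW.
have h1 : (c * (s2 * y + 4 * a + s2) <= y / 4 * (s2 * y + 4 * a + s2))%R by rewrite ler_wpM2r.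
have hyy : (y * (s2 * y) <= s2 * y)%R by rewrite ler_piMl // mulr_ge0 // ltW.
have hya : (y * a <= a)%R by rewrite ler_piMl // ltW.
have hys : (0 <= y * s2)%R by rewrite mulr_ge0 // ltW.
apply: (le_trans (lerD (lexx _) h1)).
have -> : (y / 4 * (s2 * y + 4 * a + s2) = (y * (s2 * y)) / 4 + y * a + (y * s2) / 4)%R by field.
lra.
Qed.
Local Close Scope ereal_scope.

Lemma mfZ d (T : measurableType d) (R : realType) (c : R) (f : T -> R) :
  measurable_fun setT f -> measurable_fun setT (fun w => c * f w).
Proof.
move=> mf; have -> : (fun w => c * f w) = (fun _ => c) \* f by [].
by apply: measurable_realfun.measurable_funM => //; exact: measurable_cst.
Qed.

Lemma mfD d (T : measurableType d) (R : realType) (f g : T -> R) :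
  measurable_fun setT f -> measurable_fun setT g -> measurable_fun setT (fun w => f w + g w).
Proof. by move=> mf mg; exact: measurable_realfun.measurable_funD. Qed.

Lemma mfB d (T : measurableType d) (R : realType) (f g : T -> R) :
  measurable_fun setT f -> measurable_fun setT g -> measurable_fun setT (fun w => f w - g w).
Proof.
move=> mf mg; have -> : (fun w => f w - g w) = (fun w => f w + (-1) * g w).
  by apply/funext => w; rewrite mulN1r.
by apply: mfD => //; exact: mfZ.
Qed.

Lemma sigT_in (T : Type) (G : set (set T)) : <<s G >> setT.
Proof. by have := @sigma_algebraCD T setT G set0 (@sigma_algebra0 T setT G); rewrite setD0. Qed.
Theorem mainTheorem5 (R : realType) (dd : measure_display) (Omega : measurableType dd)
  (P : probability Omega R)
  (n dim s K : nat) (eta L sigma : R) (stoch : bool) (w0 : 'rV[R]_dim)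
  (f : 'I_n -> 'rV[R]_dim -> R) (grad : 'I_n -> 'rV[R]_dim -> 'rV[R]_dim)
  (Ssel : nat -> Omega -> {set 'I_n}) (E : nat -> 'I_n -> Omega -> nat)
  (htilde : nat -> 'I_n -> nat -> Omega -> 'rV[R]_dim) :
  (1 <= n)%N -> (1 <= s <= n)%N -> (1 <= K)%N -> (1 <= dim)%N ->
  0 < eta -> 0 < L ->
  (* f_i differentiable with gradient grad i *)
  (forall i x, differentiable (f i) x /\
     forall v, 'd (f i) x v = dotp (grad i x) v) ->
  (* L-smoothness *)
  (forall i x y, enorm (grad i x - grad i y) <= L * enorm (x - y)) ->
  (* measurability of the random variables *)
  (forall t (A : {set 'I_n}), measurable [set w | Ssel t w = A]) ->
  (forall t i k, measurable [set w | E t i w = k]) ->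
  (forall t i q (j : 'I_dim), measurable_fun setT (fun w => htilde t i q w 0 j)) ->
  (* law of S_t and E_t, independence structure *)
  (forall t, (1 <= t)%N -> forall A : {set 'I_n},
     P [set w | Ssel t w = A] = (if #|A| == s then ('C(n, s)%:R)^-1 else 0)%:E) ->
  (forall t i, (1 <= t)%N -> (0 < P [set w | (0 < E t i w)%N])%E) ->
  (forall t, (1 <= t)%N -> indep_families P (SE_sigma Ssel E t) (other_sigma Ssel E htilde t)) ->
  (forall t, (1 <= t)%N -> indep_families P (S_sigma Ssel t) (E_sigma E t)) ->
  (* stochastic oracle: conditionally on the past, the noise has mean zero
     and conditional second moment at most sigma^2 *)
  (forall t i q, (1 <= t)%N -> (1 <= q)%N ->
     let xi := fun w => htilde t i q w
                 - grad i (qpoint P s K eta stoch w0 Ssel E htilde t i q w) in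
     (forall j : 'I_dim, P.-integrable setT (fun w => (xi w 0 j)%:E)) /\
     (forall A, past Ssel E htilde t i q A ->
        (forall j : 'I_dim, (\int[P]_(w in A) (xi w 0 j)%:E = 0)%E) /\
        (\int[P]_(w in A) (sqnorm (xi w))%:E <= (sigma ^+ 2)%:E * P A)%E)) ->
  eta < (4 * L * (K ^ 2)%:R)^-1 ->
  forall (i : 'I_n) (t q : nat), (1 <= q <= K)%N ->
    (\int[P]_w (sqnorm (grad i (qpoint P s K eta stoch w0 Ssel E htilde t.+1 i q w)))%:E
     <= (sigma ^+ 2 / (K ^ 2)%:R)%:E
        + (16 * L ^+ 2)%:E * \int[P]_w (sqnorm (wloc P s K eta stoch w0 Ssel E htilde t i w
                                               - mu P s K eta stoch w0 Ssel E htilde t w))%:E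
        + 8%:E * \int[P]_w (sqnorm (grad i (mu P s K eta stoch w0 Ssel E htilde t w)))%:E)%E.
Proof.
move=> Hn Hs HK Hd Heta HL Hdiff Hlip HSm HEm Hhm HSlaw HEpos Hind1 Hind2 Hnoise Heta2 i t q Hq.
pose qp r w := qpoint P s K eta stoch w0 Ssel E htilde t.+1 i r w.
pose h r w := grad i (qp r w).
pose H r w := sqnorm (h r w).
pose xi r w := htilde t.+1 i r w - h r w.
pose X r w := sqnorm (xi r w).
have Hhm' : forall t i q, mvec (htilde t i q) by move=> ? ? ? j; exact: Hhm.
have Hxi : forall r, (1 <= r)%N -> mvec (xi r) /\
    (\int[P]_w (X r w)%:E <= (sigma ^+ 2)%:E)%E.
  move=> r Hr.
  have [Hint Hpast] := Hnoise t.+1 i r isT Hr.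
  split.
    move=> j; have := measurable_int P (Hint j).
    by move/(@measurable_realfun.measurable_EFinP _ _ _ setT (fun w => xi r w 0 j)).
  have [_ Hle] := Hpast setT (sigT_in _ _).
  by move: Hle; rewrite probability_setT mule1.
have Hh : forall r, (1 <= r)%N -> mvec (h r).
  move=> r Hr; have [mx _] := Hxi r Hr.
  have -> : h r = fun w => htilde t.+1 i r w - xi r w.
    by apply/funext => w; rewrite /xi opprB addrC subrK.
  exact: mvecB.
have mH : forall r, (1 <= r)%N -> measurable_fun setT (H r).
  by move=> r Hr; apply: mf_sqnorm; exact: Hh.
have mX : forall r, (1 <= r)%N -> measurable_fun setT (X r).
  by move=> r Hr; apply: mf_sqnorm; have [] := Hxi r Hr.
have H0 : forall r w, 0 <= H r w by move=> r w; exact: sqnorm_ge0.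
have X0 : forall r w, 0 <= X r w by move=> r w; exact: sqnorm_ge0.
have qp1 : forall w, qp 1%N w = wloc P s K eta stoch w0 Ssel E htilde t i w.
  by move=> w; rewrite /qp /qpoint big_geq // scaler0 subr0.
have Hpw : forall q' w, (1 <= q')%N -> H q' w <= 2 * H 1%N w +
    (4 * L ^+ 2 * eta ^+ 2 * (q' - 1)%:R) * \sum_(1 <= r < q') (H r w + X r w).
  move=> q' w Hq'.
  have Eqp : qp q' w - qp 1%N w = - (eta *: \sum_(1 <= r < q') htilde t.+1 i r w).
    rewrite qp1 /qp /qpoint /=.
    by rewrite addrAC subrr add0r.
  have E1 : sqnorm (h q' w - h 1%N w) <= L ^+ 2 * sqnorm (qp q' w - qp 1%N w).
    exact: lip_sq (ltW HL) (Hlip i _ _).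
  rewrite Eqp sqnormN sqnormZ in E1.
  have E2 := @sqnorm_sum _ _ _ (index_iota 1 q') (fun r => htilde t.+1 i r w).
  rewrite /index_iota size_iota -/(index_iota 1 q') in E2.
  have E3 : \sum_(1 <= r < q') sqnorm (htilde t.+1 i r w) <= 2 * \sum_(1 <= r < q') (H r w + X r w).
    rewrite mulr_sumr; apply: ler_sum => r _.
    have -> : htilde t.+1 i r w = xi r w + h r w by rewrite /xi subrK.
    have := @sqnormD2 _ _ (xi r w) (h r w); rewrite -/(X r w) -/(H r w); lra.
  have E4 : H q' w <= 2 * H 1%N w + 2 * sqnorm (h q' w - h 1%N w).
    by rewrite /H -{1}(subrK (h 1%N w) (h q' w)) addrC; exact: sqnormD2.
  set T := \sum_(1 <= r < q') (H r w + X r w) in E3 *.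
  set S := \sum_(1 <= r < q') sqnorm (htilde t.+1 i r w) in E2 E3.
  set A := sqnorm (h q' w - h 1%N w) in E1 E4.
  set V := sqnorm (\sum_(1 <= r < q') htilde t.+1 i r w) in E1 E2.
  have c0 : 0 <= L ^+ 2 * eta ^+ 2 by rewrite mulr_ge0 // sqr_ge0.
  have qm0 : 0 <= ((q' - 1)%:R : R) by rewrite ler0n.
  have F1 : V <= (q' - 1)%:R * (2 * T).
    by apply: (le_trans E2); rewrite ler_wpM2l.
  have F2 : A <= L ^+ 2 * eta ^+ 2 * ((q' - 1)%:R * (2 * T)).
    apply: (le_trans E1); rewrite -mulrA.
    apply: ler_wpM2l; first exact: sqr_ge0.
    apply: ler_wpM2l; first exact: sqr_ge0.
    exact: F1.
  have -> : 4 * L ^+ 2 * eta ^+ 2 * (q' - 1)%:R * T = 2 * (L ^+ 2 * eta ^+ 2 * ((q' - 1)%:R * (2 * T))) by ring.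
  lra.
have qp0 : forall w, qp 0%N w = qp 1%N w by move=> w; rewrite /qp /qpoint !big_geq.
have Hh' : forall r, mvec (h r).
  case => [|r]; last exact: Hh.
  have -> : h 0%N = h 1%N by apply/funext => w; rewrite /h qp0.
  exact: Hh.
have mH' : forall r, measurable_fun setT (H r) by move=> r; exact: mf_sqnorm.
have mX' : forall r, measurable_fun setT (X r).
  by move=> r; apply: mf_sqnorm; apply: mvecB.
have a0 : (0 <= \int[P]_w (H 1%N w)%:E)%E by apply: integral_ge0 => w _; rewrite lee_fin.
pose k : R := K%:R.
have k1 : 1 <= k by rewrite /k ler1n.
have Heta3 : eta < (4 * L * k ^+ 2)^-1 by rewrite /k -natrX.
have Hclaim : (\int[P]_w (H q w)%:E <= (sigma ^+ 2 / k ^+ 2)%:E + 4%:E * \int[P]_w (H 1%N w)%:E)%E.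
  have [ainf|afin] := eqVneq (\int[P]_w (H 1%N w)%:E)%E +oo%E.
    by rewrite ainf gt0_muley ?lte_fin // addey // leey.
  have aE : (\int[P]_w (H 1%N w)%:E = (fine (\int[P]_w (H 1%N w)%:E))%:E)%E.
    by rewrite fineK // ge0_fin_numE // ltey.
  set a' := fine _ in aE.
  have a'0 : 0 <= a' by rewrite -lee_fin -aE.
  rewrite aE -EFinM -EFinD.
  set B := sigma ^+ 2 / k ^+ 2 + 4 * a'.
  suff : forall N q', (q' <= N)%N -> (1 <= q' <= K)%N -> (\int[P]_w (H q' w)%:E <= B%:E)%E.
    by move=> /(_ q q (leqnn q) Hq).
  elim => [|N IH] q' HqN /andP [Hq1 HqK].
    by rewrite leqn0 in HqN; rewrite (eqP HqN) in Hq1.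
  pose c := 4 * L ^+ 2 * eta ^+ 2 * (q' - 1)%:R.
  have c0 : 0 <= c by rewrite /c !mulr_ge0 ?ler0n ?sqr_ge0 // ltW.
  have mS : measurable_fun setT (fun w => \sum_(1 <= r < q') (H r w + X r w)).
    by apply: measurable_sum => r; apply: mfD.
  have S0 : forall w, 0 <= \sum_(1 <= r < q') (H r w + X r w).
    by move=> w; apply: sumr_ge0 => r _; apply: addr_ge0.
  have mf1 : measurable_fun setT (fun w => 2 * H 1%N w) by apply: mfZ.
  have mf2 : measurable_fun setT (fun w => c * \sum_(1 <= r < q') (H r w + X r w)) by apply: mfZ.
  have f10 : forall w, 0 <= 2 * H 1%N w by move=> w; rewrite mulr_ge0.
  have f20 : forall w, 0 <= c * \sum_(1 <= r < q') (H r w + X r w) by move=> w; rewrite mulr_ge0.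
  have Hle1 : (\int[P]_w (H q' w)%:E <= \int[P]_w (2 * H 1%N w + c * \sum_(1 <= r < q') (H r w + X r w))%:E)%E.
    apply: ge0_le_integral => //.
    - by move=> w _; rewrite lee_fin.
    - exact: mfE.
    - by apply: mfE; apply: mfD.
    - by move=> w _; rewrite lee_fin; exact: Hpw.
  apply: (le_trans Hle1).
  rewrite (@intD _ _ _ P _ _ mf1 mf2 f10 f20).
  rewrite (@intZ _ _ _ P 2 (H 1%N) (mH' 1%N)) //.
  rewrite (@intZ _ _ _ P c _ mS c0 S0).
  rewrite (@intS _ _ _ P _ _ (fun r w => H r w + X r w)); last 2 first.
  - by move=> r; apply: mfD.
  - by move=> r w; apply: addr_ge0.
  rewrite aE.
  have Hsum : (\sum_(1 <= r < q') \int[P]_w (H r w + X r w)%:E <= ((q' - 1)%:R * (B + sigma ^+ 2))%:E)%E.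
    have -> : ((q' - 1)%:R * (B + sigma ^+ 2))%:E = (\sum_(1 <= r < q') (B + sigma ^+ 2)%:E)%E.
      by rewrite sumEFin sumr_const_nat mulr_natl.
    rewrite big_nat_cond [X in (_ <= X)%E]big_nat_cond.
    apply: lee_sum => r /andP [/andP [r1 rq] _].
    rewrite (@intD _ _ _ P _ _ (mH' r) (mX' r) (H0 r) (X0 r)) EFinD; apply: leeD.
    - apply: IH; last by rewrite r1 /= (leq_trans (ltnW rq)).
      by rewrite -ltnS (leq_trans rq).
    - by have [_] := Hxi r r1.
  apply: le_trans (leeD (lexx _) (lee_wpmul2l _ Hsum)) _; first by rewrite lee_fin.
  rewrite -!EFinM -EFinD lee_fin.
  apply: key_real => //; try exact: sqr_ge0.
  by rewrite /k ler_nat (leq_trans (leq_subr _ _)).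
pose wl w := wloc P s K eta stoch w0 Ssel E htilde t i w.
pose m w := mu P s K eta stoch w0 Ssel E htilde t w.
pose D w := sqnorm (wl w - m w).
pose G w := sqnorm (grad i (m w)).
have [Hg Hl] := @state_meas _ _ _ P _ _ s K eta stoch w0 Ssel E htilde HSm HEm Hhm' t.
have mm : mvec m.
  by rewrite /m /mu; apply: mvecZ; apply: mvecD => //; apply: mvec_sum.
have mD : measurable_fun setT D.
  by apply: (@mf_sqnorm _ _ _ _ (fun w => wl w - m w)); apply: mvecB => //; exact: Hl.
have D0 : forall w, 0 <= D w by move=> w; exact: sqnorm_ge0.
have G0 : forall w, 0 <= G w by move=> w; exact: sqnorm_ge0.
have HGD : forall w, H 1%N w <= 2 * G w + 2 * L ^+ 2 * D w.
  move=> w; rewrite /H /h qp1 -/(wl w).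
  have E1 : sqnorm (grad i (wl w) - grad i (m w)) <= L ^+ 2 * D w.
    exact: lip_sq (ltW HL) (Hlip i _ _).
  rewrite -(subrK (grad i (m w)) (grad i (wl w))).
  apply: (le_trans (@sqnormD2 _ _ _ _)); rewrite -/(G w); lra.
pose Gh := (fun _ : Omega => 0) \max (fun w => 2^-1 * H 1%N w - L ^+ 2 * D w).
have mGh : measurable_fun setT Gh.
  apply: measurable_realfun.measurable_maxr; first exact: measurable_cst.
  by apply: mfB; apply: mfZ.
have Gh0 : forall w, 0 <= Gh w by move=> w; rewrite /Gh /= le_max lexx.
have GhG : forall w, Gh w <= G w.
  move=> w; rewrite /Gh /= ge_max G0 /=; have := HGD w; lra.
have HGh : forall w, H 1%N w <= 2 * Gh w + 2 * L ^+ 2 * D w.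
  move=> w; have : 2^-1 * H 1%N w - L ^+ 2 * D w <= Gh w by rewrite /Gh /= le_max lexx orbT.
  lra.
have L20 : 0 <= 2 * L ^+ 2 by rewrite mulr_ge0 // sqr_ge0.
have I1 : (\int[P]_w (H 1%N w)%:E <= 2%:E * \int[P]_w (Gh w)%:E + (2 * L ^+ 2)%:E * \int[P]_w (D w)%:E)%E.
  rewrite -(@intZ _ _ _ P 2 Gh mGh) // -(@intZ _ _ _ P _ D mD L20 D0).
  rewrite -(@intD _ _ _ P _ _ (@mfZ _ _ _ 2 _ mGh) (@mfZ _ _ _ (2 * L ^+ 2) _ mD)); last 2 first.
  - by move=> w; rewrite mulr_ge0.
  - by move=> w; rewrite mulr_ge0.
  apply: ge0_le_integral => //.
  - by move=> w _; rewrite lee_fin.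
  - exact: mfE.
  - by apply: mfE; apply: mfD; apply: mfZ.
  - by move=> w _; rewrite lee_fin; exact: HGh.
have I2 : (\int[P]_w (Gh w)%:E <= \int[P]_w (G w)%:E)%E.
  apply: le_integral_nm => w; rewrite lee_fin //.
have iD0 : (0 <= \int[P]_w (D w)%:E)%E by apply: integral_ge0 => w _; rewrite lee_fin.
have iGh0 : (0 <= \int[P]_w (Gh w)%:E)%E by apply: integral_ge0 => w _; rewrite lee_fin.
have I3 : (4%:E * \int[P]_w (H 1%N w)%:E <= (16 * L ^+ 2)%:E * \int[P]_w (D w)%:E + 8%:E * \int[P]_w (G w)%:E)%E.
  apply: (le_trans (lee_wpmul2l _ I1)); first by rewrite lee_fin.
  rewrite ge0_muleDr; last 2 first.
  - by rewrite mule_ge0 // lee_fin.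
  - by rewrite mule_ge0 // lee_fin.
  rewrite !muleA -!EFinM addeC; apply: leeD.
  - apply: lee_wpmul2r => //; rewrite lee_fin.
    have := sqr_ge0 L; lra.
  - have -> : (4 * 2 : R) = 8 by rewrite -natrM.
    by apply: lee_wpmul2l => //; rewrite lee_fin.
rewrite natrX -/k.
apply: (le_trans Hclaim).
by rewrite -addeA; apply: leeD2l.
Qed.
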